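(* Let $G$ be a finite simple graph. If $\chi_c(G) < g(G)$, then $G$ is a cover graph.
   Context: $\chi_c(G)$ is the circular chromatic number of $G$ (the infimum of $k/d$ over all $(k,d)$-colorings, i.e. maps $c:V(G)\to\{0,\dots,k-1\}$ with $d\le |c(x)-c(y)|\le k-d$ for every edge $xy$). $g(G)$ is the girth of $G$ (length of a shortest cycle, $\infty$ if $G$ has no cycles). A graph is a cover graph if it is the underlying (undirected) graph of the Hasse diagram of some finite partially ordered set. *)

(* Defs.v *)
From HB Require Import structures.
From mathcomp Require Import all_boot all_order all_algebra.
From mathcomp Require Import classical_sets reals ereal.
Set Implicit Arguments. Unset Strict Implicit. Unset Printing Implicit Defensive.
Import Order.TTheory GRing.Theory Num.Theory.
Local Open Scope classical_set_scope.
Local Open Scope ring_scope.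

(* A finite simple graph: vertex set a finType T, edge relation e : rel T,
   assumed symmetric and irreflexive (hypotheses in the theorem). *)

Definition kd_coloring (T : finType) (e : rel T) (k d : nat) (c : T -> 'I_k) : Prop :=
  forall x y, e x y ->
    (d <= maxn (c x) (c y) - minn (c x) (c y) <= k - d)%N.

Definition circ_chrom (R : realType) (T : finType) (e : rel T) : \bar R :=
  ereal_inf [set r : \bar R | exists k d : nat, [/\ (0 < k)%N, (0 < d)%N,
               (exists c : T -> 'I_k, @kd_coloring T e k d c) &
               r = ((k%:R / d%:R : R)%:E)] ].

Definition has_cycle_of_length (T : finType) (e : rel T) (n : nat) : Prop :=
  (3 <= n)%N /\ exists f : 'I_n -> T, injective f /\ forall i : 'I_n, e (f i) (f (ordS i)).

(* Girth: length of a shortest cycle, +oo if there is no cycle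
   (ereal_inf of the empty set is +oo). *)
Definition girth (R : realType) (T : finType) (e : rel T) : \bar R :=
  ereal_inf [set ((n%:R : R)%:E) | n in [set n : nat | has_cycle_of_length e n]].

Definition partial_order (T : Type) (le : T -> T -> Prop) : Prop :=
  [/\ (forall x, le x x),
      (forall x y, le x y -> le y x -> x = y) &
      (forall x y z, le x y -> le y z -> le x z)].

Definition covers (T : Type) (le : T -> T -> Prop) (x y : T) : Prop :=
  le x y /\ x <> y /\ ~ (exists z, le x z /\ le z y /\ z <> x /\ z <> y).

Definition cover_graph (T : finType) (e : rel T) : Prop :=
  exists le : T -> T -> Prop, partial_order le /\
    forall x y, e x y <-> (covers le x y \/ covers le y x).

(* Main.v *)
Require Import Defs.
From mathcomp Require Import all_boot all_order all_algebra.
From mathcomp Require Import classical_sets reals ereal.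
From mathcomp Require Import zify.

Set Implicit Arguments. Unset Strict Implicit. Unset Printing Implicit Defensive.
Import Order.TTheory GRing.Theory Num.Theory.

Section Aux.
Variables (T : finType) (e : rel T) (k d : nat) (c : T -> 'I_k).
Hypothesis Hc : kd_coloring e d c.
Hypothesis d_gt0 : (0 < d)%N.

Definition Er : rel T := fun x y => e x y && (c x < c y)%N.

Lemma path_col x p : path Er x p -> (c x + d * size p <= c (last x p))%N.
Proof.
elim: p x => [|a p IH] x /=; first by rewrite muln0 addn0.
move=> /andP[/andP[exa lt] pa]; have := IH a pa; have := Hc exa.
move=> /andP[h1 _] h2.
rewrite mulnS; lia.
Qed.

Lemma path_uniq x p : path Er x p -> uniq (x :: p).
Proof.
move=> hp.
have hp' : path (relpre (fun v => nat_of_ord (c v)) ltn) x p.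
  by apply: sub_path hp => a b /andP[].
have hp2 : sorted ltn (map (fun v => nat_of_ord (c v)) (x :: p)).
  by rewrite /=; have := @path_map T nat (fun v => nat_of_ord (c v)) ltn x p => ->.
apply: (@map_uniq _ _ (fun v => nat_of_ord (c v))).
by apply: sorted_uniq hp2; [exact: ltn_trans | exact: ltnn].
Qed.

Lemma path_cycle x p : symmetric e -> path Er x p -> e x (last x p) -> (2 <= size p)%N ->
  has_cycle_of_length e (size p).+1.
Proof.
move=> esym hp hxy hs; split; first by [].
exists (fun i : 'I_(size p).+1 => nth x (x :: p) i); split.
  move=> i j /eqP; rewrite nth_uniq //; last exact: path_uniq.
  by move/eqP/val_inj.
move=> i.
have -> : nat_of_ord (ordS i) = (i.+1 %% (size p).+1)%N by [].
have [ilt|ige] := ltnP i (size p).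
  rewrite modn_small //.
  by have /andP[] := (pathP x hp i ilt).
have ieq : nat_of_ord i = size p by have := ltn_ord i; lia.
rewrite ieq modnn /=.
have := nth_last x (x :: p); rewrite /= => ->.
by rewrite esym.
Qed.
End Aux.

Local Open Scope ereal_scope.

Theorem theorem14 (R : realType) (T : finType) (e : rel T)
  (e_sym : symmetric e) (e_irr : irreflexive e) :
  circ_chrom R e < girth R e -> cover_graph e.
Proof.
move=> /ereal_inf_lt [r [k [d [k0 d0 [c Hc] ->]]] Hlt].
have bypass : forall x p, path (Er e c) x p -> e x (last x p) -> (2 <= size p)%N -> False.
  move=> x p hp hxy hs.
  have hcy := path_col Hc d0 hp.
  have hb := Hc _ _ hxy.
  have hcyc := path_cycle d0 e_sym hp hxy hs.
  have hg : girth R e <= (((size p).+1)%:R : R)%:E.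
    by apply: ereal_inf_lbound; exists (size p).+1.
  have := lt_le_trans Hlt hg; rewrite lte_fin ltr_pdivrMr ?ltr0n // -natrM ltr_nat => hk.
  lia.
have colE : forall x p, path (Er e c) x p -> (0 < size p)%N -> (c x < c (last x p))%N.
  move=> x p hp hs; have := path_col Hc d0 hp; nia.
exists (fun x y => connect (Er e c) x y).
have cov : forall x y, e x y -> (c x < c y)%N -> covers (fun x y => connect (Er e c) x y) x y.
  move=> x y exy lt; split; first by apply: connect1; rewrite /Er exy lt.
  split; first by move=> h; subst; rewrite e_irr in exy.
  move=> [z [/connectP [p1 hp1 hz] [/connectP [p2 hp2 hy] [hzx hzy]]]].
  apply: (bypass x (p1 ++ p2)).
  - by rewrite cat_path hp1 -hz.
  - by rewrite last_cat -hz -hy.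
  - rewrite size_cat.
    have : (0 < size p1)%N by case: (p1) hz hzx => //= ->.
    have : (0 < size p2)%N by case: (p2) hy hzy => //= ->.
    lia.
have conv : forall x y, covers (fun x y => connect (Er e c) x y) x y -> e x y.
  move=> x y [/connectP [p hp ->] [hne hno]].
  case: p hp hne hno => [|a q] /=; first by move=> _ [].
  move=> /andP [/andP [exa lta] hq] hne hno.
  case: q hq hne hno => [|b q] hq hne hno; first by [].
  exfalso; apply: hno; exists a; split; first by apply: connect1; rewrite /Er exa lta.
  split; first by apply/connectP; exists (b :: q).
  split; first by move=> h; subst; rewrite ltnn in lta.
  move=> h; have := colE a (b :: q) hq isT; rewrite -h ltnn //.
split.
  split.
  - by move=> x; exact: connect0.
  - move=> x y /connectP [p hp hy] /connectP [q hq hx].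
    case: p hp hy => [|a p] hp hy; first by [].
    case: q hq hx => [|b q] hq hx; first by [].
    have := colE _ _ hp isT; have := colE _ _ hq isT; rewrite -hy -hx; lia.
  - by move=> x y z; exact: connect_trans.
move=> x y; split.
  move=> exy; have := Hc _ _ exy; case: (ltngtP (c x) (c y)) => h hb.
  - by left; exact: cov.
  - by right; apply: cov => //; rewrite e_sym.
  - by exfalso; rewrite h in hb; lia.
by case=> /conv //; rewrite e_sym.
Qed.
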